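(* Let $l,t,s,x,n$ be integers with $2\leq l\leq t$, $s\geq l+1$, $n\geq 2s+1$, $s\geq x\geq l$ and $n\geq x+(t-1)\binom{x}{l}+2(s-x)+1$. Let $X$ be a $K_{1,l}$-free graph on $x$ vertices with $e(X)=ex(x,K_{1,l})$, and let $S$ be a $K_{l,t}$-free graph on $2(s-x)+1$ vertices with $e(S)=ex(2(s-x)+1,K_{l,t})$, with $V(X)\cap V(S)=\emptyset$. Build a graph $G$ as follows: start from the disjoint union of $X$ and $S$; for each $l$-subset $F\subseteq V(X)$ add $t-1$ new vertices $v_{F,1},\ldots,v_{F,t-1}$, each joined to every vertex of $F$; fix an $(l-1)$-subset $F_0\subseteq V(X)$; add a set $U$ of $n-x-(t-1)\binom{x}{l}-2(s-x)-1$ new vertices, each joined to every vertex of $F_0$; and join every vertex of $S$ to every vertex of $F_0$. Call the resulting $n$-vertex graph $G_1^x$; and let $G_2^x$ be the graph obtained from $G_1^x$ by deleting all edges between $V(S)$ and $V(X)$. (i) If $2(s-x)+1\leq t$, then $G_1^x$ is $\{K_{l,t},M_{s+1}\}$-free. (ii) If $2(s-x)+1\geq t+1$, then $G_2^x$ is $\{K_{l,t},M_{s+1}\}$-free.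
   Context: All graphs are finite and simple. A graph is $\mathscr{F}$-free if it contains no member of $\mathscr{F}$ as a subgraph; $ex(m,F)$ is the maximum number of edges of an $m$-vertex $F$-free graph. $K_{a,b}$ is the complete bipartite graph with parts of sizes $a,b$; $M_{s+1}$ is the matching of $s+1$ pairwise disjoint edges. *)

(* Defs.v *)
From mathcomp Require Import all_boot.
Set Implicit Arguments. Unset Strict Implicit. Unset Printing Implicit Defensive.

Definition simple_graph (T : finType) (e : rel T) : bool :=
  [forall u, ~~ e u u] && [forall u, forall v, e u v == e v u].

Definition edge_set (T : finType) (e : rel T) : {set {set T}} :=
  [set E : {set T} | [exists u, exists v, [&& u != v, e u v & E == [set u; v]]]].

Definition nedges (T : finType) (e : rel T) : nat := #|edge_set e|.

Definition contains_K (T : finType) (e : rel T) (a b : nat) : bool :=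
  [exists A : {set T}, exists B : {set T},
    [&& #|A| == a, #|B| == b, [disjoint A & B] &
        [forall u in A, forall v in B, e u v]]].

Definition contains_M (T : finType) (e : rel T) (k : nat) : bool :=
  [exists M : {set T * T},
    [&& #|M| == k, [forall p in M, e p.1 p.2] &
        [forall p in M, forall q in M,
           (p != q) ==> [disjoint [set p.1; p.2] & [set q.1; q.2]]]]].

Definition grel (m : nat) (g : {ffun 'I_m * 'I_m -> bool}) : rel 'I_m :=
  fun u v => g (u, v).

Definition exK (m a b : nat) : nat :=
  \max_(g : {ffun 'I_m * 'I_m -> bool} |
          simple_graph (grel g) && ~~ contains_K (grel g) a b) nedges (grel g).

(* The vertex type of G_1^x / G_2^x:
   V(X) = 'I_x, V(S) = 'I_m, vertices v_{F,i} for F an l-subset of V(X), i < t-1,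
   and U = 'I_u. *)
Definition hubT (x l t : nat) :=
  {p : {set 'I_x} * 'I_(t - 1) | #|p.1| == l}.

Definition Vtx (x m l t u : nat) :=
  (('I_x + 'I_m) + (hubT x l t + 'I_u))%type.

(* Edge relation; joinXS = true gives G_1^x, joinXS = false gives G_2^x. *)
Definition Gx (x m l t u : nat) (X : rel 'I_x) (S : rel 'I_m) (F0 : {set 'I_x})
  (joinXS : bool) : rel (Vtx x m l t u) :=
  fun a b =>
    match a, b with
    | inl (inl i), inl (inl j) => X i j
    | inl (inr i), inl (inr j) => S i j
    | inl (inl i), inl (inr _) => joinXS && (i \in F0)
    | inl (inr _), inl (inl i) => joinXS && (i \in F0)
    | inl (inl i), inr (inl h) => i \in (val h).1
    | inr (inl h), inl (inl i) => i \in (val h).1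
    | inl (inl i), inr (inr _) => i \in F0
    | inr (inr _), inl (inl i) => i \in F0
    | _, _ => false
    end.

(* Main.v *)
Require Import Defs.
From mathcomp Require Import all_boot.
From mathcomp Require Import zify.

Set Implicit Arguments. Unset Strict Implicit. Unset Printing Implicit Defensive.

Section G.
Variables (x m l t u : nat) (X : rel 'I_x) (S : rel 'I_m) (F0 : {set 'I_x}) (j : bool).
Local Notation T := (Vtx x m l t u).
Local Notation e := (Gx (u:=u) (l:=l) (t:=t) X S F0 j).
Hypothesis Xirr : forall i, X i i = false.
Hypothesis Xsym : forall i k, X i k = X k i.
Hypothesis Sirr : forall i, S i i = false.
Hypothesis Ssym : forall i k, S i k = S k i.

Definition isX (v : T) := if v is inl (inl _) then true else false.
Definition isS (v : T) := if v is inl (inr _) then true else false.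
Definition inF0 (v : T) := if v is inl (inl i) then i \in F0 else false.
Definition fX (i : 'I_x) : T := inl (inl i).
Definition fS (i : 'I_m) : T := inl (inr i).

Lemma fX_inj : injective fX. Proof. by move=> a b [->]. Qed.
Lemma fS_inj : injective fS. Proof. by move=> a b [->]. Qed.

Lemma esym a b : e a b = e b a.
Proof.
by case: a => [[a|a]|[a|a]]; case: b => [[b|b]|[b|b]] //=; rewrite ?Xsym ?Ssym.
Qed.

Lemma eirr a : e a a = false.
Proof. by case: a => [[a|a]|[a|a]] //=; rewrite ?Xirr ?Sirr. Qed.

Lemma e_nonX a b : e a b -> ~~ isX a -> ~~ isX b -> isS a && isS b.
Proof. by case: a => [[a|a]|[a|a]]; case: b => [[b|b]|[b|b]]. Qed.

Lemma e_S a b : e a b -> isS a -> isS b || j && inF0 b.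
Proof. by case: a => [[a|a]|[a|a]]; case: b => [[b|b]|[b|b]]. Qed.

Lemma e_HU a b : e a b -> ~~ isX a -> ~~ isS a -> isX b.
Proof. by case: a => [[a|a]|[a|a]]; case: b => [[b|b]|[b|b]]. Qed.

Lemma isXP a : isX a -> exists i, a = fX i.
Proof. by case: a => [[i|]|] //; exists i. Qed.

Lemma card_pre (A : finType) (f : A -> T) (Y : {set T}) :
  injective f -> (forall y, y \in Y -> exists a, y = f a) -> #|f @^-1: Y| = #|Y|.
Proof.
move=> fi HY.
have E : f @: (f @^-1: Y) = Y.
  apply/setP=> y; apply/imsetP/idP.
  - by case=> a; rewrite inE => Ha ->.
  - move=> yY; case: (HY y yY)=> a Ea; exists a => //; by rewrite inE -Ea.
by rewrite -{2}E card_imset.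
Qed.

Lemma card_Xpart : #|[set v : T | isX v]| = x.
Proof.
rewrite -(card_pre (f := fX)); last first.
  by move=> y; rewrite inE => /isXP.
  exact: fX_inj.
have -> : fX @^-1: [set v : T | isX v] = setT by apply/setP=> i; rewrite !inE.
by rewrite cardsT card_ord.
Qed.

Lemma card_Spart : #|[set v : T | isS v]| = m.
Proof.
rewrite -(card_pre (f := fS)); last first.
  by move=> y; rewrite inE; case: y => [[i|i]|] //; exists i.
  exact: fS_inj.
have -> : fS @^-1: [set v : T | isS v] = setT by apply/setP=> i; rewrite !inE.
by rewrite cardsT card_ord.
Qed.

Hypothesis HF0 : #|F0| = l - 1.

Lemma F0card (Y : {set T}) : (forall y, y \in Y -> inF0 y) -> #|Y| <= l - 1.
Proof.
move=> HY; rewrite -(card_pre (f := fX)); last first.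
  by move=> y /HY; case: y => [[i|]|] //; exists i.
  exact: fX_inj.
rewrite -HF0; apply: subset_leq_card; apply/subsetP=> i; rewrite inE => /HY //.
Qed.

Hypothesis XK : ~~ contains_K X 1 l.

Lemma deg (i : 'I_x) (Y : {set T}) : (forall y, y \in Y -> isX y) ->
  (forall y, y \in Y -> e (fX i) y) -> #|Y| < l.
Proof.
move=> HX He; rewrite ltnNge; apply/negP=> HY.
have cY : #|fX @^-1: Y| = #|Y| by apply: card_pre; [exact: fX_inj| by move=> y /HX/isXP].
rewrite -cY in HY.
case/card_geqP: HY => s [us ss sub].
apply: (negP XK); apply/existsP; exists [set i]; apply/existsP; exists [set y in s].
rewrite cards1 cardsE (card_uniqP us) ss !eqxx /=.
apply/andP; split.
  rewrite disjoints1 inE; apply/negP=> /sub; rewrite inE => /He.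
  by rewrite /= Xirr.
apply/forall_inP=> a; rewrite inE => /eqP ->; apply/forall_inP=> b; rewrite inE.
by move=> /sub; rewrite inE => /He.
Qed.

Hypothesis Hl : 2 <= l.

Lemma hubs (Y Z : {set T}) : (forall y, y \in Y -> isX y) -> l <= #|Y| ->
  (forall z, z \in Z -> ~~ isX z && ~~ isS z) ->
  (forall z y, z \in Z -> y \in Y -> e z y) ->
  #|Z| <= t - 1 /\ (0 < #|Z| -> #|Y| <= l).
Proof.
move=> HX HY HZ He.
set Y' := fX @^-1: Y.
have cY : #|Y'| = #|Y| by apply: card_pre; [exact: fX_inj| by move=> y /HX/isXP].
have key : forall z, z \in Z -> exists h, z = inr (inl h) /\ (val h).1 = Y'.
  move=> z zZ; move: (HZ z zZ) (He z) => /andP [].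
  case: z zZ => [[z|z]|[h|w]] // zZ _ _ Hz.
  - exists h; split => //; apply/eqP; rewrite eq_sym eqEcard; apply/andP; split.
      by apply/subsetP=> k; rewrite inE => /(Hz _ zZ).
    by rewrite cY (eqP (valP h)).
  - have : #|Y| <= l - 1.
      rewrite -cY -HF0; apply: subset_leq_card; apply/subsetP=> k; rewrite inE.
      by move=> /(Hz _ zZ).
    lia.
set H := [set h : hubT x l t | (val h).1 == Y'].
have cH : #|H| <= t - 1.
  rewrite -(card_in_imset (f := fun h : hubT x l t => (val h).2)).
    by apply: leq_trans (max_card _) _; rewrite card_ord.
  move=> h1 h2; rewrite !inE => /eqP E1 /eqP E2 E.
  apply: val_inj; move: E1 E2 E; case: (val h1) => a1 b1; case: (val h2) => a2 b2 /=.
  by move=> -> -> ->.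
split.
  apply: leq_trans cH; apply: leq_trans (leq_imset_card (fun h => (inr (inl h) : T)) H).
  apply: subset_leq_card; apply/subsetP=> z zZ; case: (key z zZ) => h [-> E].
  by apply/imsetP; exists h; rewrite // inE E.
case/card_gt0P=> z zZ; case: (key z zZ) => h [_ E].
by rewrite -cY -E (eqP (valP h)).
Qed.

Hypothesis Hlt : l <= t.

Lemma Kfree : (j -> m <= t) -> (~~ j -> ~~ contains_K S l t) -> ~~ contains_K e l t.
Proof.
move=> H1 H2.
apply/negP; case/existsP=> A /existsP [B /and4P [/eqP cA /eqP cB dAB /forall_inP H]].
have adj : forall a b, a \in A -> b \in B -> e a b.
  by move=> a b aA bB; exact: (forall_inP (H a aA) b bB).
have cAB : #|A :|: B| = l + t by rewrite cardsU (disjoint_setI0 dAB) cards0 cA cB subn0.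
case: (boolP [exists v in A :|: B, isS v]) => [/exists_inP [v vAB Sv] | hnS].
- pose SF v := isS v || j && inF0 v.
  have exB : (forall b, b \in B -> SF b) -> exists2 b, b \in B & isS b.
    move=> HB; case: (boolP [exists b in B, isS b]) => [/exists_inP [b ? ?]|hn].
      by exists b.
    have : #|B| <= l - 1.
      apply: F0card => b bB; move: (HB b bB); rewrite /SF.
      have -> : isS b = false.
        by apply/negP=> Sb; apply: (negP hn); apply/exists_inP; exists b.
      by case/andP.
    lia.
  have exA : (forall a, a \in A -> SF a) -> exists2 a, a \in A & isS a.
    move=> HA; case: (boolP [exists a in A, isS a]) => [/exists_inP [a ? ?]|hn].
      by exists a.
    have : #|A| <= l - 1.
      apply: F0card => a aA; move: (HA a aA); rewrite /SF.
      have -> : isS a = false.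
        by apply/negP=> Sa; apply: (negP hn); apply/exists_inP; exists a.
      by case/andP.
    lia.
  have fromA : (exists2 a, a \in A & isS a) -> forall b, b \in B -> SF b.
    by case=> a aA Sa b bB; apply: e_S Sa; apply: adj.
  have fromB : (exists2 b, b \in B & isS b) -> forall a, a \in A -> SF a.
    by case=> b bB Sb a aA; apply: e_S Sb; rewrite esym; apply: adj.
  have allSF : forall w, w \in A :|: B -> SF w.
    have [hA hB] : (forall a, a \in A -> SF a) /\ (forall b, b \in B -> SF b).
      move: vAB; rewrite inE => /orP [vA|vB].
        have hB := fromA (ex_intro2 _ _ v vA Sv); split => //.
        by apply: fromB; apply: exB.
      have hA := fromB (ex_intro2 _ _ v vB Sv); split => //.
      by apply: fromA; apply: exA.
    by move=> w; rewrite inE => /orP [/hA|/hB].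
  case Hj: j in H1 H2.
  + have := H1 isT.
    have : #|A :|: B| <= m + (l - 1).
      apply: leq_trans (_ : #|[set v : T | isS v] :|: [set v : T | inF0 v]| <= _).
        apply: subset_leq_card; apply/subsetP=> w /allSF; rewrite /SF !inE.
        by case/orP => [->|/andP [_ ->]] //; rewrite orbT.
      rewrite cardsU card_Spart; apply: leq_trans (leq_subr _ _) _.
      by rewrite leq_add2l; apply: F0card => w; rewrite inE.
    lia.
  + apply: (negP (H2 isT)); apply/existsP; exists (fS @^-1: A).
    apply/existsP; exists (fS @^-1: B).
    have sub : forall Y : {set T}, Y \subset A :|: B -> forall y, y \in Y -> exists a, y = fS a.
      move=> Y /subsetP sY y /sY /allSF; rewrite /SF Hj orbF.
      by case: y => [[|i]|] //; exists i.
    rewrite !card_pre ?cA ?cB ?eqxx //=; try exact: fS_inj; last first.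
      by apply: sub; rewrite ?subsetUl ?subsetUr.
      by apply: sub; rewrite ?subsetUl ?subsetUr.
    apply/andP; split.
      by rewrite -setI_eq0 -preimsetI (disjoint_setI0 dAB) preimset0.
    apply/forall_inP=> a; rewrite inE => aA; apply/forall_inP=> b; rewrite inE => bB.
    exact: (adj _ _ aA bB).
- have nS : forall w, w \in A :|: B -> ~~ isS w.
    by move=> w Hw; apply/negP=> Sw; apply: (negP hnS); apply/exists_inP; exists w.
  have nSA : forall a, a \in A -> ~~ isS a by move=> a aA; apply: nS; rewrite inE aA.
  have nSB : forall b, b \in B -> ~~ isS b by move=> b bB; apply: nS; rewrite inE bB orbT.
  case: (boolP [exists a in A, ~~ isX a]) => [/exists_inP [a aA naX] | hA].
  + have BX : forall b, b \in B -> isX b.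
      by move=> b bB; apply: (e_HU (adj _ _ aA bB)) => //; apply: nSA.
    have AnX : forall a', a' \in A -> ~~ isX a' && ~~ isS a'.
      move=> a' a'A; rewrite nSA // andbT; apply/negP => /isXP [i Ei].
      have : #|B| < l by apply: (@deg i) => // y yB; rewrite -Ei; apply: adj.
      lia.
    have lB : l <= #|B| by rewrite cB.
    have [h1 h2] := hubs BX lB AnX adj.
    have A0 : 0 < #|A| by rewrite cA; lia.
    have := h2 A0. move=> hh. rewrite cA cB in h1 hh. lia.
  + have AX : forall a, a \in A -> isX a.
      move=> a aA; apply: contraNT hA => naX; apply/exists_inP; by exists a.
    case: (boolP [exists b in B, ~~ isX b]) => [/exists_inP [b bB nbX] | hB].
    * have BnX : forall b', b' \in B -> ~~ isX b' && ~~ isS b'.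
        move=> b' b'B; rewrite nSB // andbT; apply/negP => /isXP [i Ei].
        have : #|A| < l by apply: (@deg i) => // y yA; rewrite -Ei esym; apply: adj.
        lia.
      have lA : l <= #|A| by rewrite cA.
      have [h1 h2] := hubs AX lA BnX (fun z y zB yA => etrans (esym z y) (adj y z yA zB)).
      rewrite cB in h1; lia.
    * have BX : forall b, b \in B -> isX b.
        move=> b bB; apply: contraNT hB => nbX; apply/exists_inP; by exists b.
      have : 0 < #|A| by rewrite cA; lia.
      case/card_gt0P=> a aA; case: (isXP (AX a aA)) => i Ei.
      have : #|B| < l by apply: (@deg i) => // y yB; rewrite -Ei; apply: adj.
      lia.
Qed.


Lemma Mfree s : x <= s -> m <= (2 * (s - x)).+1 -> ~~ contains_M e s.+1.
Proof.
move=> xs hm.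
apply/negP; case/existsP=> M /and3P [/eqP cM /forall_inP Me /forall_inP Md].
have disj : forall p q v, p \in M -> q \in M -> v \in [set p.1; p.2] ->
    v \in [set q.1; q.2] -> p = q.
  move=> p q v pM qM vp vq; apply/eqP; apply: contraTT (forall_inP (Md p pM) q qM) => npq.
  rewrite negb_imply npq /= -setI_eq0; apply/set0Pn; exists v; by rewrite inE vp vq.
set P := [set p : T * T | isX p.1 || isX p.2].
have cMs := cardsID P M.
have hX : #|M :&: P| <= x.
  pose g (p : T * T) := if isX p.1 then p.1 else p.2.
  apply: leq_trans (_ : _ <= #|[set v : T | isX v]|) _; last by rewrite card_Xpart.
  rewrite -(card_in_imset (f := g)).
    apply: subset_leq_card; apply/subsetP => v /imsetP [p]; rewrite !inE => /andP [pM pX] ->.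
    rewrite /g; case: ifP => [//|nX].
    by case/orP: pX => [|//]; rewrite nX.
  move=> p q; rewrite !inE => /andP [pM _] /andP [qM _] E.
  apply: (disj p q (g p)) => //; first by rewrite /g !inE; case: ifP => _; rewrite eqxx ?orbT.
  by rewrite E /g !inE; case: ifP => _; rewrite eqxx ?orbT.
have hS : #|M :\: P| <= s - x.
  set MS := M :\: P.
  have MSp : forall p, p \in MS -> [/\ p \in M, isS p.1 & isS p.2].
    move=> p; rewrite !inE negb_or => /andP [/andP [nx1 nx2] pM].
    by have /andP [s1 s2] := e_nonX (Me p pM) nx1 nx2.
  have inj1 : {in MS &, injective (fun p : T * T => p.1)}.
    move=> p q pS qS E; case: (MSp p pS) (MSp q qS) => pM _ _ [qM _ _].
    by apply: (disj p q p.1) => //; rewrite ?E !inE eqxx.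
  have inj2 : {in MS &, injective (fun p : T * T => p.2)}.
    move=> p q pS qS E; case: (MSp p pS) (MSp q qS) => pM _ _ [qM _ _].
    by apply: (disj p q p.2) => //; rewrite ?E !inE eqxx ?orbT.
  have dj : (fun p : T * T => p.1) @: MS :&: (fun p : T * T => p.2) @: MS = set0.
    apply/setP=> v; rewrite !inE; apply/negbTE/negP => /andP [/imsetP [p pS ->] /imsetP [q qS E]].
    case: (MSp p pS) (MSp q qS) => pM _ _ [qM _ _].
    have pq : p = q by apply: (disj p q p.1) => //; rewrite ?E !inE eqxx ?orbT.
    move: E; rewrite pq => E; have := Me q qM; by rewrite -E eirr.
  have : #|(fun p : T * T => p.1) @: MS| + #|(fun p : T * T => p.2) @: MS| <= m.
    apply: leq_trans (_ : _ <= #|[set v : T | isS v]|) _; last by rewrite card_Spart.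
    have := cardsU ((fun p : T * T => p.1) @: MS) ((fun p : T * T => p.2) @: MS).
    rewrite dj cards0 subn0 => <-.
    apply: subset_leq_card; apply/subsetP=> v; rewrite inE => /setUP [] /imsetP [p pS ->];
      by case: (MSp p pS).
  rewrite (card_in_imset inj1) (card_in_imset inj2). lia.
have := leq_add hX hS; rewrite cMs cM; lia.
Qed.

End G.

Theorem lemma2p5 (l t s x n : nat)
  (X : rel 'I_x) (S : rel 'I_(2 * (s - x)).+1) (F0 : {set 'I_x}) :
  2 <= l -> l <= t -> l.+1 <= s -> (2 * s).+1 <= n -> l <= x -> x <= s ->
  x + (t - 1) * 'C(x, l) + (2 * (s - x)).+1 <= n ->
  simple_graph X -> ~~ contains_K X 1 l -> nedges X = exK x 1 l ->
  simple_graph S -> ~~ contains_K S l t -> nedges S = exK (2 * (s - x)).+1 l t ->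
  #|F0| = l - 1 ->
  let u := n - x - (t - 1) * 'C(x, l) - (2 * (s - x)).+1 in
  ((2 * (s - x)).+1 <= t ->
     ~~ contains_K (Gx (u := u) (l := l) (t := t) X S F0 true) l t &&
     ~~ contains_M (Gx (u := u) (l := l) (t := t) X S F0 true) s.+1) /\
  (t.+1 <= (2 * (s - x)).+1 ->
     ~~ contains_K (Gx (u := u) (l := l) (t := t) X S F0 false) l t &&
     ~~ contains_M (Gx (u := u) (l := l) (t := t) X S F0 false) s.+1).
Proof.
move=> Hl Hlt Hls Hn Hlx Hxs Hn2 sX XK _ sS SK _ HF0 u.
have [Xi Xs] : (forall i, X i i = false) /\ (forall i k, X i k = X k i).
  move: sX => /andP [/forallP Xi /forallP Xs]; split.
    by move=> i; exact: negbTE (Xi i).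
  by move=> i k; exact: eqP (forallP (Xs i) k).
have [Si Ss] : (forall i, S i i = false) /\ (forall i k, S i k = S k i).
  move: sS => /andP [/forallP Si /forallP Ss]; split.
    by move=> i; exact: negbTE (Si i).
  by move=> i k; exact: eqP (forallP (Ss i) k).
split => Hm; apply/andP; split.
- apply: Kfree => //; by [exact: Xi|exact: Xs|exact: Si|exact: Ss|move=> _].
- apply: Mfree => //; by [exact: Xi|exact: Xs|exact: Si|exact: Ss].
- apply: Kfree => //; by [exact: Xi|exact: Xs|exact: Si|exact: Ss|move=> _; lia].
- apply: Mfree => //; by [exact: Xi|exact: Xs|exact: Si|exact: Ss].
Qed.
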